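(* Let $X$ be a real Banach space with modulus of smoothness $\rho(u,X)\le\gamma u^q$ for all $u\ge0$, where $\gamma>0$ and $1<q\le2$; set $\mu(u):=\gamma u^q$ and $p:=\frac{q}{q-1}$. Let $t\in(0,1]$, $b\in(0,1]$, and $c:=(1-b)\left(\frac{b}{2\gamma}\right)^{\frac1{q-1}}$. Then for every $m\ge1$ and every $\alpha\in(0,1]$ with $\alpha\le \frac{t(1-b)}{1+t(1-b)}$, $$\gamma_m^{t,b,\mu}(\alpha,X)\le (1+mct^p)^{-\alpha/p},$$ and the same inequality holds for $\gamma_m^{t,b,\mu}(\alpha,X)^*$.
   Context: The modulus of smoothness is $\rho(u,X):=\sup_{\|x\|=\|y\|=1}\bigl(\tfrac12(\|x+uy\|+\|x-uy\|)-1\bigr)$. A (symmetric) dictionary is a set $\mathcal D\subset X$ of unit-norm elements with $\overline{\operatorname{span}}\,\mathcal D=X$ and $g\in\mathcal D\Rightarrow-g\in\mathcal D$. $A_1(\mathcal D)$ is the closed convex hull of $\mathcal D$, $\|f\|_{A_1(\mathcal D)}:=\inf\{M:f/M\in A_1(\mathcal D)\}$. For $f\ne0$, $F_f$ denotes a norming functional ($\|F_f\|=1$, $F_f(f)=\|f\|$; unique here since $X$ is uniformly smooth), and $r_{\mathcal D}(f):=\sup_{g\in\mathcal D}F_f(g)$. Dual Greedy Algorithm DGA$(t,b,\mu)$: $f_0:=f$, $G_0:=0$; if $f_{m-1}=0$ set $f_j=0$ for $j\ge m$ and stop; otherwise (1) take any $\varphi_m\in\mathcal D$ with $F_{f_{m-1}}(\varphi_m)\ge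 t\,r_{\mathcal D}(f_{m-1})$; (2) choose $c_m>0$ from $\|f_{m-1}\|\mu(c_m/\|f_{m-1}\|)=\frac{tb}{2}c_m r_{\mathcal D}(f_{m-1})$; (3) $f_m:=f_{m-1}-c_m\varphi_m$, $G_m^{t,b,\mu}:=G_{m-1}^{t,b,\mu}+c_m\varphi_m$. The modification DGA$(t,b,\mu)^*$ is identical except that in (2) $c_m>0$ solves $\|f_{m-1}\|\mu(c_m/\|f_{m-1}\|)=\frac b2 c_mF_{f_{m-1}}(\varphi_m)$. Define $$\gamma_m^{t,b,\mu}(\alpha,X):=\sup_{\mathcal D}\sup_f\sup_{G^{t,b,\mu}_m(f,\mathcal D)}\frac{\|f-G^{t,b,\mu}_m(f,\mathcal D)\|}{\|f\|^{1-\alpha}\|f\|_{A_1(\mathcal D)}^{\alpha}},$$ over all dictionaries, all $f\ne0$ with $\|f\|_{A_1(\mathcal D)}<\infty$, and all realizations of DGA$(t,b,\mu)$ after $m$ steps; $\gamma_m^{t,b,\mu}(\alpha,X)^*$ is the same quantity for DGA$(t,b,\mu)^*$. *)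

(* Defs.v *)
From HB Require Import structures.
From mathcomp Require Import all_boot all_order all_algebra.
From mathcomp Require Import all_classical all_reals all_analysis.
Set Implicit Arguments. Unset Strict Implicit. Unset Printing Implicit Defensive.
Import Order.TTheory GRing.Theory Num.Theory.
Import numFieldNormedType.Exports.
Local Open Scope classical_set_scope.
Local Open Scope ring_scope.

Section DGA.
Context {R : realType} {X : normedModType R}.

Definition mod_smooth (u : R) : R :=
  sup [set r | exists x y : X, `|x| = 1 /\ `|y| = 1 /\
         r = (`|x + u *: y| + `|x - u *: y|) / 2 - 1].

Definition span_set (D : set X) : set X :=
  [set v | exists (n : nat) (a : 'I_n -> R) (g : 'I_n -> X),
      (forall i, D (g i)) /\ v = \sum_(i < n) a i *: g i].

Definition dictionary (D : set X) : Prop :=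
  [/\ forall g, D g -> `|g| = 1,
      closure (span_set D) = setT &
      forall g, D g -> D (- g)].

Definition conv_hull (D : set X) : set X :=
  [set v | exists (n : nat) (a : 'I_n -> R) (g : 'I_n -> X),
      [/\ forall i, D (g i), forall i, 0 <= a i, \sum_(i < n) a i = 1 &
          v = \sum_(i < n) a i *: g i]].

Definition A1 (D : set X) : set X := closure (conv_hull D).

Definition A1_set (D : set X) (f : X) : set R :=
  [set M | 0 < M /\ A1 D (M^-1 *: f)].

Definition A1_finite (D : set X) (f : X) : Prop := A1_set D f !=set0.

(* ||f||_{A_1(D)} = inf {M : f/M in A_1(D)} (used only when A1_finite) *)
Definition A1_norm (D : set X) (f : X) : R := inf (A1_set D f).

(* F is a norming functional of f: ||F|| = 1 and F f = ||f|| (f <> 0) *)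
Definition norming (F : {linear X -> R^o}) (f : X) : Prop :=
  (forall x, `|F x| <= `|x|) /\ F f = `|f|.

Definition r_D (D : set X) (F : {linear X -> R^o}) : R := sup [set F g | g in D].

(* one step of DGA(t,b,mu) (star = false) or DGA(t,b,mu)^* (star = true),
   from (f_{m-1}, G_{m-1}) to (f_m, G_m) *)
Definition DGA_step (star : bool) (D : set X) (t b : R) (mu : R -> R)
  (fprev fnext Gprev Gnext : X) : Prop :=
  (fprev = 0 /\ fnext = 0 /\ Gnext = Gprev) \/
  (fprev <> 0 /\
   exists (F : {linear X -> R^o}) (phi : X) (c : R),
     [/\ norming F fprev, D phi, F phi >= t * r_D D F & 0 < c] /\
     [/\ `|fprev| * mu (c / `|fprev|) =
           (if star then b / 2 * c * F phi else t * b / 2 * c * r_D D F),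
         fnext = fprev - c *: phi &
         Gnext = Gprev + c *: phi]).

Definition DGA_realization (star : bool) (D : set X) (t b : R) (mu : R -> R)
  (f : X) (fs Gs : nat -> X) : Prop :=
  [/\ fs 0%N = f, Gs 0%N = 0 &
      forall m, DGA_step star D t b mu (fs m) (fs m.+1) (Gs m) (Gs m.+1)].

End DGA.

Definition gammaDGA {R : realType} (X : normedModType R) (star : bool)
  (t b : R) (mu : R -> R) (alpha : R) (m : nat) : \bar R :=
  ereal_sup [set r : \bar R | exists (D : set X) (f : X) (fs Gs : nat -> X),
     [/\ dictionary D, f <> 0, A1_finite D f,
         DGA_realization star D t b mu f fs Gs &
         r = (`|f - Gs m| /
                (powR `|f| (1 - alpha) * powR (A1_norm D f) alpha))%:E]].

(* Main.v *)
Require Import Defs.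
From HB Require Import structures.
From mathcomp Require Import all_boot all_order all_algebra.
From mathcomp Require Import all_classical all_reals all_analysis.
From mathcomp Require Import ring lra.
Import Order.TTheory GRing.Theory Num.Theory.
Import numFieldNormedType.Exports.
Local Open Scope classical_set_scope.
Local Open Scope ring_scope.
Set Implicit Arguments. Unset Strict Implicit.


Definition bnd {R : realType} {X : normedModType R} (F : {linear X -> R^o}) :=
  forall x, `|F x| <= `|x|.

Lemma F_le (R : realType) (X : normedModType R) (F : {linear X -> R^o}) x :
  bnd F -> F x <= `|x|.
Proof. move=> hF; exact: le_trans (ler_norm _) (hF x). Qed.

Lemma FZ (R : realType) (X : normedModType R) (F : {linear X -> R^o}) a x :
  F (a *: x) = a * F x.
Proof. by rewrite linearZ. Qed.

Lemma rD_ub (R : realType) (X : normedModType R) (D : set X) (F : {linear X -> R^o}) :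
  (forall g, D g -> `|g| = 1) -> bnd F -> has_ubound [set F g | g in D].
Proof.
move=> hD hF; exists 1 => _ [g Dg <-]; by rewrite -(hD g Dg) F_le.
Qed.

Lemma rD_ge (R : realType) (X : normedModType R) (D : set X) (F : {linear X -> R^o}) g :
  (forall g, D g -> `|g| = 1) -> bnd F -> D g -> F g <= r_D D F.
Proof.
move=> hD hF Dg; apply: sup_ubound; first exact: rD_ub.
by exists g.
Qed.

Lemma rD_le1 (R : realType) (X : normedModType R) (D : set X) (F : {linear X -> R^o}) g :
  (forall g, D g -> `|g| = 1) -> bnd F -> D g -> r_D D F <= 1.
Proof.
move=> hD hF Dg; apply: sup_le_ub; first by exists (F g); exists g.
move=> _ [h Dh <-]; by rewrite -(hD h Dh) F_le.
Qed.

Lemma rD_ge0 (R : realType) (X : normedModType R) (D : set X) (F : {linear X -> R^o}) g :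
  (forall g, D g -> `|g| = 1) -> (forall g, D g -> D (- g)) -> bnd F -> D g -> 0 <= r_D D F.
Proof.
move=> hD hS hF Dg; have h1 := rD_ge hD hF Dg.
have h2 := rD_ge hD hF (hS _ Dg); rewrite linearN in h2; lra.
Qed.

Lemma rD_abs (R : realType) (X : normedModType R) (D : set X) (F : {linear X -> R^o}) g :
  (forall g, D g -> `|g| = 1) -> (forall g, D g -> D (- g)) -> bnd F -> D g -> `|F g| <= r_D D F.
Proof.
move=> hD hS hF Dg; have h1 := rD_ge hD hF Dg.
have h2 := rD_ge hD hF (hS _ Dg); rewrite linearN in h2.
by rewrite ler_norml; apply/andP; split; lra.
Qed.

Lemma A1_le (R : realType) (X : normedModType R) (D : set X) (F : {linear X -> R^o}) v :
  (forall g, D g -> `|g| = 1) -> bnd F -> A1 D v -> F v <= r_D D F.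
Proof.
move=> hD hF hv.
have hc : forall w, conv_hull D w -> F w <= r_D D F.
  move=> _ [n [a [g [Dg a0 a1 ->]]]].
  rewrite linear_sum /=.
  apply: (@le_trans _ _ (\sum_(i < n) a i * r_D D F)).
    apply: ler_sum => i _; rewrite FZ; apply: ler_wpM2l => //.
    exact: rD_ge.
  by rewrite -mulr_suml a1 mul1r.
rewrite leNgt; apply/negP => hlt.
have e0 : 0 < F v - r_D D F by rewrite subr_gt0.
have [w [cw bw]] := hv _ (nbhsx_ballx v _ e0).
have := hc w cw.
move: bw; rewrite -ball_normE /ball_ /= => bw.
have : F v - F w <= `|v - w| by rewrite -linearB F_le.
lra.
Qed.

Lemma Ff_le (R : realType) (X : normedModType R) (D : set X) (F : {linear X -> R^o}) f :
  (forall g, D g -> `|g| = 1) -> bnd F -> A1_finite D f -> 0 <= r_D D F ->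
  F f <= A1_norm D f * r_D D F.
Proof.
move=> hD hF hfin r0.
have hM : forall M, A1_set D f M -> F f <= M * r_D D F.
  move=> M [M0 hM]; have := A1_le hD hF hM; rewrite FZ.
  by rewrite ler_pdivrMl // => h; rewrite mulrC.
case: (eqVneq (r_D D F) 0) => [re|rn].
  case: hfin => M hm; have := hM M hm; by rewrite re !mulr0.
have rp : 0 < r_D D F by rewrite lt_def rn r0.
rewrite -ler_pdivrMr //; apply: lb_le_inf => // M hm.
rewrite ler_pdivrMr //; exact: hM.
Qed.

Lemma A1n_ge0 (R : realType) (X : normedModType R) (D : set X) f :
  A1_finite D f -> 0 <= A1_norm D f.
Proof.
move=> hfin; apply: lb_le_inf => // M [M0 _]; exact: ltW.
Qed.

Lemma smooth_le (R : realType) (X : normedModType R) (x y : X) u :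
  `|x| = 1 -> `|y| = 1 -> 0 <= u ->
  (`|x + u *: y| + `|x - u *: y|) / 2 - 1 <= @mod_smooth R X u.
Proof.
move=> hx hy u0; apply: sup_ubound; last by exists x, y.
exists u => _ [x' [y' [hx' [hy' ->]]]].
have h1 : `|x' + u *: y'| <= 1 + u by rewrite -hx' (le_trans (ler_normD _ _)) // normrZ hy' mulr1 ger0_norm.
have h2 : `|x' - u *: y'| <= 1 + u by rewrite -hx' (le_trans (ler_normB _ _)) // normrZ hy' mulr1 ger0_norm.
lra.
Qed.


Lemma step_norm (R : realType) (X : normedModType R) (gamma q : R)
  (F : {linear X -> R^o}) (fk phi : X) (c : R) :
  (forall u : R, 0 <= u -> @mod_smooth R X u <= gamma * powR u q) ->
  bnd F -> F fk = `|fk| -> fk != 0 -> `|phi| = 1 -> 0 < c ->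
  `|fk - c *: phi| <= `|fk| - c * F phi + 2 * `|fk| * (gamma * powR (c / `|fk|) q).
Proof.
move=> hsm hF hFf fk0 hphi c0.
set a := `|fk|.
have a0 : 0 < a by rewrite normr_gt0.
set x := a^-1 *: fk.
set u := c / a.
have u0 : 0 <= u by rewrite divr_ge0 // ltW.
have hx : `|x| = 1 by rewrite /x normrZ ger0_norm ?invr_ge0 ?ltW // mulVf // gt_eqF.
have hs := le_trans (smooth_le hx hphi u0) (hsm u u0).
have hp : 1 + u * F phi <= `|x + u *: phi|.
  apply: le_trans (F_le _ hF); rewrite linearD !FZ hFf /a mulVf // gt_eqF //.
have -> : fk - c *: phi = a *: (x - u *: phi).
  rewrite scalerBr /x /u scalerA mulfV ?gt_eqF // scale1r scalerA.
  by rewrite mulrCA mulfV ?gt_eqF // mulr1.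
rewrite normrZ (ger0_norm (ltW a0)).
have -> : c = a * u by rewrite /u mulrCA mulfV ?gt_eqF // mulr1.
set P := gamma * _.
have : `|x - u *: phi| <= 1 - u * F phi + 2 * P.
  move: hs hp; rewrite -/P.
  set n1 := `|x + u *: phi|; set n2 := `|x - u *: phi|; set Fp := F phi.
  lra.
move=> h; rewrite -[a * u * F phi]mulrA.
have : a * `|x - u *: phi| <= a * (1 - u * F phi + 2 * P) by rewrite ler_pM2l.
lra.
Qed.


Lemma powR_le (R : realType) (x y e : R) : 0 <= e -> 0 <= x -> x <= y -> powR x e <= powR y e.
Proof.
move=> e0 x0 xy; apply: ge0_ler_powR => //; rewrite nnegrE //; exact: le_trans xy.
Qed.

Lemma powR_add1 (R : realType) (z e : R) : 0 < z -> powR z e * z = powR z (e + 1).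
Proof.
move=> z0; rewrite powRD ?powRr1 ?ltW //; apply/implyP => _; by rewrite gt_eqF.
Qed.

Lemma c_bound (R : realType) (a c gamma q v : R) :
  0 < a -> 0 < c -> 0 < gamma -> 1 < q -> 0 <= v ->
  c * v <= a * (gamma * powR (c / a) q) ->
  a * powR (v / gamma) (1 / (q - 1)) <= c.
Proof.
move=> a0 c0 g0 q1 v0 h.
set u := c / a.
have u0 : 0 < u by rewrite divr_gt0.
have hc : c = a * u by rewrite /u mulrCA mulfV ?gt_eqF // mulr1.
have hq : powR u q = powR u (q - 1) * u.
  by rewrite powR_add1 // subrK.
have h2 : v <= gamma * powR u (q - 1).
  move: h; rewrite -/u hc hq.
  have -> : a * (gamma * (powR u (q - 1) * u)) = (a * u) * (gamma * powR u (q - 1)) by ring.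
  by rewrite ler_pM2l // mulr_gt0.
have h3 : v / gamma <= powR u (q - 1) by rewrite ler_pdivrMr // mulrC.
have e0 : 0 <= 1 / (q - 1) by rewrite divr_ge0 // subr_ge0 ltW.
have := powR_le e0 (divr_ge0 v0 (ltW g0)) h3.
have hqe : (q - 1) * (1 / (q - 1)) = 1.
  by rewrite mul1r mulfV // subr_eq0 gt_eqF.
rewrite -powRrM hqe powRr1; last exact: ltW u0.
by move=> hh; rewrite hc ler_pM2l.
Qed.

Lemma powR_1x (R : realType) (x d : R) : 0 <= x -> 0 <= d -> powR (1 + x) d <= expR (d * x).
Proof.
move=> x0 d0; rewrite /powR.
have -> : (1 + x == 0) = false by apply: gt_eqF; lra.
rewrite ler_expR; apply: ler_wpM2l => //; apply: le_ln1Dx; lra.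
Qed.

Lemma inv_part1 (R : realType) (a B r c a' d : R) :
  0 < a -> 0 < B -> a <= B * r -> 0 < c -> 0 <= a' -> 0 <= d ->
  a' <= a - d * c * r ->
  a' * powR (B + c) d <= a * powR B d.
Proof.
move=> a0 B0 aB c0 a'0 d0 h1.
set x := c / B.
have x0 : 0 <= x by rewrite divr_ge0 // ltW.
have hBc : B + c = B * (1 + x) by rewrite /x mulrDr mulr1 mulrCA mulfV ?gt_eqF // mulr1.
have hr : a * x <= c * r.
  have aBr : a / B <= r by rewrite ler_pdivrMr // mulrC.
  by rewrite /x mulrCA ler_wpM2l // ltW.
have h1' : a' <= a * (1 - d * x).
  have : d * (a * x) <= d * (c * r) by rewrite ler_wpM2l.
  move: h1; set cr := c * r; set ax := a * x.
  have -> : a - d * c * r = a - d * cr by rewrite /cr mulrA.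
  move=> h1 h2.
  have -> : a * (1 - d * x) = a - d * ax by rewrite /ax; ring.
  lra.
rewrite hBc powRM; [|exact: ltW|lra].
set PB := powR B d; set P1 := powR (1 + x) d.
have PB0 : 0 <= PB by exact: powR_ge0.
have P10 : 0 <= P1 by exact: powR_ge0.
have hP1 : P1 <= expR (d * x) by exact: powR_1x.
have hE : 1 - d * x <= expR (- (d * x)) by rewrite -[X in X <= _]addrC; apply: le_trans (expR_ge1Dx _); lra.
have hEE : expR (- (d * x)) * expR (d * x) = 1 by rewrite -expRD addNr expR0.
have hpos : 0 <= 1 - d * x.
  rewrite leNgt; apply/negP => hn.
  have : a * (1 - d * x) < 0 by rewrite pmulr_rlt0.
  lra.
have k1 : a' * P1 <= a * (1 - d * x) * expR (d * x).
  apply: ler_pM => //.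
have k2' : (1 - d * x) * expR (d * x) <= 1.
  by apply: (le_trans (ler_wpM2r (ltW (expR_gt0 _)) hE)); rewrite hEE.
have k2 : a * (1 - d * x) * expR (d * x) <= a.
  by have := ler_wpM2l (ltW a0) k2'; rewrite mulr1 mulrA.
rewrite mulrCA [a * PB]mulrC.
apply: ler_wpM2l => //; lra.
Qed.

Lemma inv_part2 (R : realType) (a B r c a' d kap K q k : R) :
  0 < a -> 0 < B -> a <= B * r -> 0 < c -> 0 <= a' -> 0 <= d -> 0 <= kap ->
  K = d * kap -> 1 < q -> 0 <= k ->
  a' <= a - d * c * r -> a * kap * powR r (1 / (q - 1)) <= c ->
  powR (a / B) (q / (q - 1)) * (1 + k * K) <= 1 ->
  powR (a' / (B + c)) (q / (q - 1)) * (1 + (k + 1) * K) <= 1.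
Proof.
move=> a0 B0 aB c0 a'0 d0 k0 hK q1 kk0 h1 h2 inv.
set e := 1 / (q - 1).
set p := q / (q - 1).
have q10 : 0 < q - 1 by rewrite subr_gt0.
have e0 : 0 <= e by rewrite /e divr_ge0 // ltW.
have hpe : p = e + 1 by rewrite /p /e; field; rewrite subr_eq0 gt_eqF.
have p1 : 1 <= p by rewrite hpe; lra.
set z := a / B.
have z0 : 0 < z by rewrite divr_gt0.
have zr : z <= r by rewrite /z ler_pdivrMr // mulrC.
set y := powR z p.
have y0 : 0 <= y by exact: powR_ge0.
have K0 : 0 <= K by rewrite hK mulr_ge0.
have hcr : a * kap * y <= c * r.
  have h3 : powR z e <= powR r e by apply: powR_le => //; exact: ltW.
  have hy : y = powR z e * z by rewrite /y hpe powR_add1.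
  have r0 : 0 < r by exact: lt_le_trans zr.
  apply: (@le_trans _ _ (a * kap * powR r e * r)); last by rewrite ler_pM2r.
  rewrite hy mulrA; apply: ler_pM => //.
  - by rewrite mulr_ge0 // ?powR_ge0 // mulr_ge0 // ltW.
  - by rewrite ltW.
  - by rewrite ler_wpM2l // mulr_ge0 // ltW.
have h1' : a' <= a * (1 - K * y).
  have : d * (a * kap * y) <= d * (c * r) by rewrite ler_wpM2l.
  have -> : a * (1 - K * y) = a - d * (a * kap * y) by rewrite hK; ring.
  move: h1; rewrite -mulrA; set cr := c * r; set aky := a * kap * y; lra.
have hKy : 0 <= 1 - K * y.
  rewrite leNgt; apply/negP => hn.
  have : a * (1 - K * y) < 0 by rewrite pmulr_rlt0.
  lra.
have ha' : a' / (B + c) <= z * (1 - K * y).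
  apply: (@le_trans _ _ (a' / B)).
    rewrite ler_pdivrMr ?addr_gt0 // mulrDr divfK ?gt_eqF //.
    rewrite lerDl; apply: mulr_ge0; last exact: ltW.
    by apply: divr_ge0 => //; exact: ltW.
  rewrite ler_pdivrMr // /z mulrAC mulfVK ?gt_eqF //.
have hp : powR (a' / (B + c)) p <= y * (1 - K * y).
  apply: (@le_trans _ _ (powR (z * (1 - K * y)) p)).
    apply: powR_le => //; [lra| by rewrite divr_ge0 // ?ltW // addr_gt0].
  rewrite (powRM _ (ltW z0) hKy) -/y; apply: ler_wpM2l => //.
  case: (eqVneq (1 - K * y) 0) => [->|hn].
    by rewrite powR0 // gt_eqF //; lra.
  apply: ge1r_powR => //; apply/andP; split; [by rewrite lt_def hn hKy | have := mulr_ge0 K0 y0; lra].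
have inv' : y * (1 + k * K) <= 1 by [].
have hm : 0 <= (1 - K * y) * (1 - y * (1 + k * K)) by apply: mulr_ge0; lra.
have hfin : y * (1 - K * y) * (1 + (k + 1) * K) <= 1.
  have -> : y * (1 - K * y) * (1 + (k + 1) * K) =
    y * (1 + k * K) + K * y - (K * y) * (y * (1 + k * K)) - (K * y) * (K * y) by ring.
  have := sqr_ge0 (K * y); rewrite expr2.
  move: hm; set Ky := K * y; set Z := y * (1 + k * K) => hm hs.
  have : (1 - Ky) * (1 - Z) = 1 - Z - Ky + Ky * Z by ring.
  rewrite [Ky * Z]mulrC; lra.
apply: le_trans hfin; apply: ler_wpM2r => //.
rewrite addr_ge0 // mulr_ge0 //; lra.
Qed.

Lemma final_bound (R : realType) (am a0 A B Q d alpha p : R) :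
  0 <= am -> 0 < a0 -> 0 < A -> A <= B -> 1 <= Q -> 0 <= d -> 0 < p ->
  0 < alpha -> alpha <= d / (1 + d) ->
  am * powR B d <= a0 * powR A d -> powR (am / B) p * Q <= 1 ->
  am / (powR a0 (1 - alpha) * powR A alpha) <= powR Q (- (alpha / p)).
Proof.
move=> am0 a00 A0 AB Q1 d0 p0 al0 hal h2 h3.
have B0 : 0 < B by exact: lt_le_trans AB.
have Q0 : 0 < Q by exact: lt_le_trans Q1.
case: (eqVneq am 0) => [->|amn]; first by rewrite mul0r powR_ge0.
have am0' : 0 < am by rewrite lt_def amn am0.
have dp : 0 < d.
  rewrite lt_def d0 andbT; apply/negP => /eqP hd; move: hal; rewrite hd mul0r; lra.
have P1 : 0 < powR a0 (1 - alpha) * powR A alpha by rewrite mulr_gt0 // powR_gt0.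
rewrite -ler_ln ?posrE ?divr_gt0 ?powR_gt0 //.
rewrite ln_div ?posrE ?powR_gt0 // lnM ?posrE ?powR_gt0 // !ln_powR.
move: h2; rewrite -ler_ln ?posrE ?mulr_gt0 ?powR_gt0 // !lnM ?posrE ?powR_gt0 // !ln_powR => h2.
have h3' : ln (powR (am / B) p * Q) <= 0 by apply: ln_le0.
move: h3'; rewrite lnM ?posrE ?powR_gt0 ?divr_gt0 // ln_powR ln_div ?posrE // => h3'.
have hw : ln A <= ln B by rewrite ler_ln ?posrE.
move: h2 h3' hw.
set u := ln am; set v := ln a0; set w := ln A; set b := ln B; set l := ln Q.
move=> h2 h3'' hw.
set L := l / p.
have hl : l = p * L by rewrite /L mulrC divfK // gt_eqF.
have h1 : u + L <= b.
  have e : p * (u - b + L) = p * (u - b) + l by rewrite hl; ring.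
  have : p * (u - b + L) <= 0 by rewrite e.
  rewrite pmulr_rle0 //; lra.
have e1 : d * (u + L) <= d * b by rewrite ler_wpM2l.
have e2 : d * w <= d * b by rewrite ler_wpM2l.
have huv : u <= v by nra.
have E1 : alpha * ((1 + d) * u + d * L) <= alpha * (v + d * w).
  apply: ler_wpM2l; first exact: ltW al0.
  nra.
have hc : 0 <= d - alpha * (1 + d).
  by move: hal; rewrite ler_pdivlMr ?addr_gt0 //; lra.
have E2 : (d - alpha * (1 + d)) * (u - v) <= 0 by rewrite mulr_ge0_le0 //; lra.
have : d * (u - ((1 - alpha) * v + alpha * w) + alpha * L) <= 0 by nra.
rewrite pmulr_rle0 // hl => hfin.
have -> : - (alpha / p) * (p * L) = - (alpha * L) by field; rewrite gt_eqF.
lra.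
Qed.


Lemma f_le_A (R : realType) (X : normedModType R) (star : bool) (D : set X) (f : X)
  (fs Gs : nat -> X) (t b : R) mu :
  dictionary D -> f <> 0 -> A1_finite D f ->
  DGA_realization star D t b mu f fs Gs -> `|f| <= A1_norm D f.
Proof.
move=> [hD _ hS] f0 hfin [hf0 _ hst].
case: (hst 0%N) => [[hf _]|[_ [F [phi [c [[[hF hFf] Dphi _ _] _]]]]]].
  by move: f0; rewrite -hf0 hf.
rewrite hf0 in hFf.
have r0 := rD_ge0 hD hS hF Dphi.
have r1 := rD_le1 hD hF Dphi.
rewrite -hFf; apply: le_trans (Ff_le hD hF hfin r0) _.
rewrite -[X in _ <= X]mulr1; apply: ler_wpM2l => //; exact: A1n_ge0.
Qed.

Lemma main_inv (R : realType) (X : normedModType R) (star : bool) (D : set X) (f : X)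
  (fs Gs : nat -> X) (gamma q t b : R) :
  0 < gamma -> 1 < q ->
  (forall u : R, 0 <= u -> @mod_smooth R X u <= gamma * powR u q) ->
  0 < t -> t <= 1 -> 0 < b -> b <= 1 ->
  dictionary D -> f <> 0 -> A1_finite D f ->
  DGA_realization star D t b (fun u : R => gamma * powR u q) f fs Gs ->
  forall k : nat, fs k = f - Gs k /\ exists B, A1_norm D f <= B /\
   (forall F : {linear X -> R^o}, bnd F -> `|F (Gs k)| <= (B - A1_norm D f) * r_D D F) /\
   `|fs k| * powR B (t * (1 - b)) <= `|f| * powR (A1_norm D f) (t * (1 - b)) /\
   powR (`|fs k| / B) (q / (q - 1)) *
     (1 + k%:R * (t * (1 - b) * powR (t * b / (2 * gamma)) (1 / (q - 1)))) <= 1.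
Proof.
move=> g0 q1 hsm t0 t1 b0 b1 hdict f0 hfin hreal.
have fA := f_le_A hdict f0 hfin hreal.
move: hdict hreal => [hD _ hS] [hf0 hG0 hst].
set A := A1_norm D f.
have A0 : 0 < A by apply: lt_le_trans fA; rewrite normr_gt0; apply/eqP.
set d := t * (1 - b).
have d0 : 0 <= d by apply: mulr_ge0; [exact: ltW | rewrite subr_ge0].
set e := 1 / (q - 1).
set kap := powR (t * b / (2 * gamma)) e.
have kap0 : 0 <= kap by exact: powR_ge0.
have p0 : 0 < q / (q - 1) by rewrite divr_gt0 ?subr_gt0 //; lra.
elim=> [|k [hfk [B [AB [hG [h2 h3]]]]]].
  split; first by rewrite hf0 hG0 subr0.
  exists A; split => //; split.
    by move=> F hF; rewrite hG0 linear0 normr0 subrr mul0r.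
  split; first by rewrite hf0.
  have h1 : powR 1 (q / (q - 1)) = 1 :> R by rewrite powR1.
  rewrite mul0r addr0 mulr1 hf0 -[X in _ <= X]h1.
  apply: powR_le; [exact: ltW|exact: divr_ge0 (normr_ge0 _) (ltW A0)|].
  by rewrite ler_pdivrMr // mul1r.
have B0 : 0 < B by exact: lt_le_trans AB.
case: (hst k) => [[fk0 [fn Gn]]|[fkn [F [phi [c [[[hF hFf] Dphi hphi c0] [heq hfn hGn]]]]]]].
  split; first by rewrite fn Gn -hfk fk0.
  exists B; split => //; split; first by rewrite Gn.
  split; first by rewrite fn normr0 mul0r mulr_ge0 ?powR_ge0.
  rewrite fn normr0 mul0r powR0 ?mul0r //; exact: lt0r_neq0.
set a := `|fs k|.
have a0 : 0 < a by rewrite normr_gt0; apply/eqP.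
set r := r_D D F.
have r0 : 0 <= r := rD_ge0 hD hS hF Dphi.
have aBr : a <= B * r.
  have h1 := Ff_le hD hF hfin r0.
  have h2' := hG F hF.
  have h3' : - F (Gs k) <= `|F (Gs k)| by rewrite -normrN ler_norm.
  have : a = F f - F (Gs k) by rewrite /a -hFf hfk linearB.
  move: h1 h2' h3'; rewrite -/A -/r; set FG := F (Gs k); set Ff := F f; set nFG := `|FG|.
  move=> h1 h2' h3' ->; nra.
have hphir : t * r <= F phi := hphi.
have hphiR : F phi <= r := rD_ge hD hF Dphi.
have hnorm := step_norm hsm hF hFf (introN eqP fkn) (hD _ Dphi) c0.
set a' := `|fs k.+1|.
have a'0 : 0 <= a' by exact: normr_ge0.
have hstep : a' <= a - d * c * r.
  rewrite /a' hfn; apply: le_trans hnorm _.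
  move: heq; rewrite -/a -/r; set M := gamma * _.
  move=> heq.
  have hc : 0 <= c by exact: ltW.
  have hb' : 0 <= 1 - b by rewrite subr_ge0.
  move: heq; case: (star) => heq; rewrite -mulrA heq /d.
  - have : (1 - b) * c * (t * r) <= (1 - b) * c * F phi by rewrite ler_wpM2l // mulr_ge0.
    set Fp := F phi; move=> hh.
    have -> : 2 * (b / 2 * c * Fp) = b * c * Fp by field.
    have -> : a - t * (1 - b) * c * r = a - (1 - b) * c * (t * r) by ring.
    have -> : a - c * Fp + b * c * Fp = a - (1 - b) * c * Fp by ring.
    lra.
  - have : c * (t * r) <= c * F phi by rewrite ler_wpM2l.
    set Fp := F phi; move=> hh.
    have -> : 2 * (t * b / 2 * c * r) = b * (c * (t * r)) by field.
    have -> : a - t * (1 - b) * c * r = a - c * (t * r) + b * (c * (t * r)) by ring.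
    lra.
have hcb : a * kap * powR r e <= c.
  have hv : c * (t * b * r / 2) <= a * (gamma * powR (c / a) q).
    move: heq; case: (star) => heq; rewrite heq.
    - have : c * (t * r) <= c * F phi by rewrite ler_wpM2l // ltW.
      set Fp := F phi; move=> hh.
      have -> : c * (t * b * r / 2) = b / 2 * (c * (t * r)) by ring.
      have -> : b / 2 * c * Fp = b / 2 * (c * Fp) by ring.
      rewrite ler_wpM2l //; rewrite divr_ge0 // ltW //.
    - rewrite -/r.
      have -> : t * b / 2 * c * r = c * (t * b * r / 2) by ring.
      exact: lexx.
  have := c_bound a0 c0 g0 q1 _ hv.
  have -> : t * b * r / 2 / gamma = t * b / (2 * gamma) * r by field; rewrite gt_eqF.
  rewrite powRM; last exact: r0.
    by rewrite mulrA; apply; rewrite !mulr_ge0 ?divr_ge0 ?invr_ge0 // ltW.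
  by apply: ltW; apply: divr_gt0; apply: mulr_gt0.
split; first by rewrite hfn hfk hGn opprD addrA.
exists (B + c); split; first by rewrite (le_trans AB) // lerDl ltW.
split.
  move=> G hG'; rewrite hGn linearD FZ.
  apply: le_trans (ler_normD _ _) _.
  have := hG G hG'; have := rD_abs hD hS hG' Dphi.
  rewrite normrM (ger0_norm (ltW c0)).
  set rr := r_D D G; set n1 := `|G phi|; set n2 := `|G (Gs k)|.
  move=> h1 h2'.
  have : c * n1 <= c * rr by rewrite ler_wpM2l // ltW.
  lra.
split.
  apply: le_trans h2; exact: inv_part1 a0 B0 aBr c0 a'0 d0 hstep.
rewrite -natr1.
have K0 : d * kap = d * kap by [].
exact: inv_part2 a0 B0 aBr c0 a'0 d0 kap0 K0 q1 (ler0n _ _) hstep hcb h3.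
Qed.

Unset Implicit Arguments.
Set Strict Implicit.

Theorem theorem3p2 (R : realType) (X : completeNormedModType R)
  (gamma q t b : R) :
  0 < gamma -> 1 < q -> q <= 2 ->
  (forall u : R, 0 <= u -> @mod_smooth R X u <= gamma * powR u q) ->
  0 < t -> t <= 1 -> 0 < b -> b <= 1 ->
  let mu := fun u : R => gamma * powR u q in
  let p := q / (q - 1) in
  let c := (1 - b) * powR (b / (2 * gamma)) (1 / (q - 1)) in
  forall (m : nat) (alpha : R), (1 <= m)%N ->
    0 < alpha -> alpha <= 1 -> alpha <= t * (1 - b) / (1 + t * (1 - b)) ->
    (gammaDGA X false t b mu alpha m
       <= (powR (1 + m%:R * c * powR t p) (- (alpha / p)))%:E)%E /\
    (gammaDGA X true t b mu alpha m
       <= (powR (1 + m%:R * c * powR t p) (- (alpha / p)))%:E)%E.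
Proof.
move=> g0 q1 q2 hsm t0 t1 b0 b1 mu p c m alpha m1 al0 al1 hal.
set e := 1 / (q - 1).
set K := t * (1 - b) * powR (t * b / (2 * gamma)) e.
have hK : m%:R * c * powR t p = m%:R * K.
  have hp : p = e + 1 by rewrite /p /e; field; rewrite subr_eq0 gt_eqF.
  rewrite -mulrA; congr (_ * _).
  have hb2 : 0 <= b / (2 * gamma) by apply: ltW; apply: divr_gt0 => //; apply: mulr_gt0.
  rewrite /K /c hp -powR_add1 // (_ : t * b / (2 * gamma) = t * (b / (2 * gamma))); last by ring.
  rewrite (powRM _ (ltW t0) hb2).
  ring.
have K0 : 0 <= K.
  apply: mulr_ge0; last exact: powR_ge0.
  apply: mulr_ge0; [exact: ltW | by rewrite subr_ge0].
have p0 : 0 < p by rewrite divr_gt0 ?subr_gt0 //; lra.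
have key : forall star, (gammaDGA X star t b mu alpha m
       <= (powR (1 + m%:R * c * powR t p) (- (alpha / p)))%:E)%E.
  move=> star; apply: ge_ereal_sup => _ [D [f [fs [Gs [hdict f0 hfin hreal ->]]]]].
  rewrite lee_fin hK.
  have fA := f_le_A hdict f0 hfin hreal.
  have [hfm [B [AB [_ [h2 h3]]]]] := main_inv g0 q1 hsm t0 t1 b0 b1 hdict f0 hfin hreal m.
  rewrite -hfm.
  have f0' : 0 < `|f| by rewrite normr_gt0; apply/eqP.
  apply: (@final_bound R `|fs m| `|f| (A1_norm D f) B (1 + m%:R * K) (t * (1 - b)) alpha p) => //.
  - exact: lt_le_trans fA.
  - by rewrite lerDl mulr_ge0 // ler0n.
  - apply: mulr_ge0; [exact: ltW | by rewrite subr_ge0].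
by split; apply: key.
Qed.
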